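(* Let $\lambda$ be a composition of $n\ge 2$. For each $1\le k\le n$ and each $\sigma\in\Omega_\lambda$, almost surely $$\sigma_{\tilde U_\lambda}\big(\xi_1(\sigma),\dots,\xi_k(\sigma)\big)=\sigma_{\downarrow k}.$$ In particular, if $\sigma_\lambda$ is uniform on $\Omega_\lambda$, the random permutations $(\sigma_\lambda)_{\downarrow k}$ and $\sigma_{\tilde U_\lambda}(\xi^\lambda_1,\dots,\xi^\lambda_k)$ have the same law.
   Context: A composition $\lambda=(\lambda_1,\dots,\lambda_r)$ of $n$ has descent set $D_\lambda=\{\lambda_1,\lambda_1+\lambda_2,\dots,\lambda_1+\dots+\lambda_{r-1}\}$. $\Omega_\lambda=\{\sigma\in\mathfrak{S}_n: des(\sigma)=D_\lambda\}$ where $des(\sigma)=\{i:\sigma(i+1)<\sigma(i)\}$ (permutations written as words). For $\sigma\in\mathfrak{S}_n$, $\sigma_{\downarrow k}\in\mathfrak{S}_k$ is the word obtained by erasing the letters $k+1,\dots,n$. Peaks/valleys: $i\in[1,n]$ is a peak if $i\in D_\lambda\cup\{n\}$ and $i-1\notin D_\lambda$; a valley if $i\notin D_\lambda$ and $i-1\in D_\lambda\cup\{0\}$. Let $1=a_1<a_2<\dots<a_{t+1}=n$ be the peaks and valleys. The slope $\mathfrak{s}(i)=[x(i),y(i)]$ of a cell $i$ is the maximal integer subinterval of $[1,n]$ containing $i$ and no peak or valley other than $i$ itself. Averaged coordinates: given $\sigma\in\Omega_\lambda$, let $\xi_1(\sigma),\dots,\xi_n(\sigma)$ be independent, with $\xi_i(\sigma)$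 uniform on $[\frac{x(\sigma^{-1}(i))-1}{n},\frac{y(\sigma^{-1}(i))}{n}]$. With $\sigma_\lambda$ uniform on $\Omega_\lambda$, $\xi^\lambda_i=\xi_i(\sigma_\lambda)$ (the uniform variables drawn independently of $\sigma_\lambda$). Run paintbox: $\tilde U_\lambda=(\tilde U_\uparrow(\lambda),\tilde U_\downarrow(\lambda))$ with $\tilde U_\uparrow(\lambda)=\bigcup_{a_i\text{ valley}}]\frac{a_i-1}{n},\frac{a_{i+1}-1}{n}[$, $\tilde U_\downarrow(\lambda)=\bigcup_{a_i\text{ peak}}]\frac{a_i-1}{n},\frac{a_{i+1}-1}{n}[$, with the convention $a_{i+1}=n+1$ when $a_i=n$. Paintbox: for a pair $U=(U_\uparrow,U_\downarrow)$ of disjoint open subsets of $]0,1[$ and $x_1,\dots,x_k\in[0,1]$, $\sigma_U(x_1,\dots,x_k)\in\mathfrak{S}_k$ is defined by $\sigma^{-1}(i)<\sigma^{-1}(j)$ iff ($x_i,x_j$ not in a common component of $U_\uparrow$ or of $U_\downarrow$ and $x_i<x_j$) or (same component of $U_\uparrow$ and $i<j$) or (same component of $U_\downarrow$ and $j<i$). *)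

(* Defs.v *)
From HB Require Import structures.
From mathcomp Require Import all_boot all_order all_algebra all_fingroup.
From mathcomp Require Import all_classical all_reals all_analysis.
Set Implicit Arguments. Unset Strict Implicit. Unset Printing Implicit Defensive.
Import Order.TTheory GRing.Theory Num.Theory numFieldNormedType.Exports.
Local Open Scope classical_set_scope.
Local Open Scope ring_scope.

(* ---------- Combinatorics (everything 1-based, as in the paper) ---------- *)

Definition is_composition (lam : seq nat) (n : nat) : bool :=
  all (fun p => 0 < p)%N lam && (sumn lam == n).

(* D_lam = {lam_1, lam_1+lam_2, ..., lam_1+...+lam_{r-1}} *)
Definition descent_set (lam : seq nat) : seq nat :=
  [seq sumn (take i lam) | i <- iota 1 (size lam).-1].

(* a permutation s of [1,n] written as a word s(1) s(2) ... s(n), letters 1..n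
   (s : 'S_n acts on 'I_n = {0..n-1}; letter = value + 1) *)
Definition word n (s : 'S_n) : seq nat := [seq (s i).+1 | i <- enum 'I_n].

(* s(p) for a 1-based position p *)
Definition wval n (s : 'S_n) (p : nat) : nat := nth 0%N (word s) p.-1.

(* 1-based position of letter a, i.e. s^{-1}(a) *)
Definition wpos n (s : 'S_n) (a : nat) : nat := (index a (word s)).+1.

Definition is_descent n (s : 'S_n) (i : nat) : bool :=
  [&& (0 < i)%N, (i < n)%N & (wval s i.+1 < wval s i)%N].

Definition Omega (n : nat) (lam : seq nat) : {set 'S_n} :=
  [set s : 'S_n | [forall i : 'I_n.+1, ((i : nat) \in descent_set lam) == is_descent s i]].

Definition is_peak (lam : seq nat) (n i : nat) : bool :=
  [&& (1 <= i <= n)%N, (i \in descent_set lam) || (i == n) & (i.-1 \notin descent_set lam)].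
Definition is_valley (lam : seq nat) (n i : nat) : bool :=
  [&& (1 <= i <= n)%N, (i \notin descent_set lam) & (i.-1 \in descent_set lam) || (i.-1 == 0)%N].
Definition is_extremal (lam : seq nat) (n i : nat) : bool :=
  is_peak lam n i || is_valley lam n i.

(* slope s(i) = [x(i), y(i)] : the maximal integer interval of [1,n] containing i
   and no peak/valley other than i.  Its left end is 1 + (largest peak/valley < i)
   (1 if there is none), its right end is (smallest peak/valley > i) - 1 (n if none). *)
Definition slope_x (lam : seq nat) (n i : nat) : nat :=
  (\max_(0 <= j < i | is_extremal lam n j) j).+1.
Definition slope_y (lam : seq nat) (n i : nat) : nat :=
  (\big[minn/n.+1]_(i.+1 <= j < n.+1 | is_extremal lam n j) j).-1.

(* next peak/valley after a, with the convention n+1 after n *)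
Definition next_ext (lam : seq nat) (n a : nat) : nat :=
  \big[minn/n.+1]_(a.+1 <= j < n.+1 | is_extremal lam n j) j.

Section Paintbox.
Variable R : realType.

Definition U_up (lam : seq nat) (n : nat) : set R :=
  \bigcup_(a in [set a : nat | is_valley lam n a])
    [set t : R | ((a%:R - 1) / n%:R < t) && (t < ((next_ext lam n a)%:R - 1) / n%:R)].
Definition U_down (lam : seq nat) (n : nat) : set R :=
  \bigcup_(a in [set a : nat | is_peak lam n a])
    [set t : R | ((a%:R - 1) / n%:R < t) && (t < ((next_ext lam n a)%:R - 1) / n%:R)].

Definition same_comp (A : set R) (u v : R) : Prop := connected_component A u v.

(* sigma_U(x_1,...,x_k) = tau  (x given 1-based): tau^{-1}(i) < tau^{-1}(j) iff ... *)
Definition paintbox_is (Uup Udn : set R) (k : nat) (x : nat -> R) (tau : 'S_k) : Prop :=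
  forall i j : nat, (1 <= i <= k)%N -> (1 <= j <= k)%N ->
    ((wpos tau i < wpos tau j)%N <->
     [\/ [/\ ~ same_comp Uup (x i) (x j), ~ same_comp Udn (x i) (x j) & x i < x j],
         same_comp Uup (x i) (x j) /\ (i < j)%N
       | same_comp Udn (x i) (x j) /\ (j < i)%N]).
End Paintbox.

(* tau = s_{\downarrow k} : erase the letters k+1..n from the word of s *)
Definition restr_is (n k : nat) (s : 'S_n) (tau : 'S_k) : bool :=
  word tau == [seq a <- word s | (a <= k)%N].

Section Prob.
Context {R : realType} {d : measure_display} {T : measurableType d}.

Definition is_uniform (P : probability T R) (X : T -> R) (a b : R) : Prop :=
  measurable_fun setT X /\
  forall A : set R, measurable A ->
    P (X @^-1` A) = (lebesgue_measure (A `&` [set t : R | (a <= t <= b)%R]) * ((b - a)^-1)%:E)%E.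

Definition mutually_independent (n : nat) (P : probability T R) (X : 'I_n -> T -> R) : Prop :=
  forall A : 'I_n -> set R, (forall i, measurable (A i)) ->
    P (\bigcap_(i in [set: 'I_n]) (X i @^-1` A i)) = (\prod_(i < n) P (X i @^-1` A i))%E.

(* value of the family at letter a (1-based): X_a = X (a-1) *)
Definition xat (n : nat) (X : 'I_n -> T -> R) (t : T) (a : nat) : R :=
  oapp (fun o : 'I_n => X o t) 0 (insub a.-1 : option 'I_n).

Definition averaged_coords (lam : seq nat) (n : nat) (s : 'S_n)
    (P : probability T R) (X : 'I_n -> T -> R) : Prop :=
  mutually_independent P X /\
  forall i : 'I_n,
    is_uniform P (X i)
      (((slope_x lam n (wpos s i.+1))%:R - 1) / n%:R)
      ((slope_y lam n (wpos s i.+1))%:R / n%:R).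
End Prob.

(* Main.v *)
Require Import Defs.
From HB Require Import structures.
From mathcomp Require Import all_boot all_order all_algebra all_fingroup.
From mathcomp Require Import all_classical all_reals all_analysis.
Import Order.TTheory GRing.Theory Num.Theory numFieldNormedType.Exports.
Set Implicit Arguments. Unset Strict Implicit. Unset Printing Implicit Defensive.

Lemma bigmin_le (x0 : nat) (r : seq nat) (P : pred nat) b :
  b \in r -> P b -> (\big[minn/x0]_(j <- r | P j) j <= b)%N.
Proof.
elim: r => //= y r IH; rewrite in_cons big_cons => /orP[/eqP<-|br] Pb.
  by rewrite Pb geq_minl.
by case: (P y); rewrite ?geq_min IH ?orbT.
Qed.

Lemma bigmin_ge (x0 m : nat) (r : seq nat) (P : pred nat) :
  (m <= x0)%N -> (forall j, j \in r -> P j -> m <= j)%N ->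
  (m <= \big[minn/x0]_(j <- r | P j) j)%N.
Proof.
move=> mx; elim: r => [|y r IH] H; first by rewrite big_nil.
rewrite big_cons; case: ifP => Py.
  by rewrite leq_min H ?mem_head // IH // => j jr; apply: H; rewrite in_cons jr orbT.
by apply: IH => j jr; apply: H; rewrite in_cons jr orbT.
Qed.

Lemma bigmin_cases (x0 : nat) (r : seq nat) (P : pred nat) :
  let m := \big[minn/x0]_(j <- r | P j) j in m = x0 \/ (m \in r /\ P m).
Proof.
elim: r => [|y r IH] /=; first by rewrite big_nil; left.
rewrite big_cons; case: ifP => Py.
  rewrite /minn; case: ltnP => _; first by right; rewrite mem_head.
  case: IH => [->|[H1 H2]]; [by left | by right; rewrite in_cons H1 orbT].
case: IH => [->|[H1 H2]]; [by left | by right; rewrite in_cons H1 orbT].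
Qed.

Lemma bigmax_ge_el (r : seq nat) (P : pred nat) b :
  b \in r -> P b -> (b <= \big[maxn/0%N]_(j <- r | P j) j)%N.
Proof.
elim: r => //= y r IH; rewrite in_cons big_cons => /orP[/eqP<-|br] Pb.
  by rewrite Pb leq_maxl.
by case: (P y); rewrite ?leq_max IH ?orbT.
Qed.

Section Comb.
Variables (n : nat) (lam : seq nat).
Hypothesis n2 : (2 <= n)%N.
Hypothesis Hlam : is_composition lam n.

Local Notation D := (descent_set lam).
Local Notation ext := (is_extremal lam n).
Local Notation nx := (next_ext lam n).

Lemma D0 : 0%N \notin D.
Proof.
case/andP: Hlam => /allP pos _.
apply/mapP => -[i]; rewrite mem_iota => /andP[i1 i2].
move: pos i1 i2; case: (lam) => [|x l] pos i1 i2; first by rewrite /= in i2; case: i i1 i2 => [|[]].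
case: i i1 {i2} => // i _; rewrite /= => H.
have := pos x (mem_head _ _); rewrite H; by case: x {pos} H.
Qed.

Lemma ext1 : ext 1.
Proof.
rewrite /is_extremal /is_peak /is_valley /= (negbTE D0) /=.
have -> : (1 <= n)%N by apply: leq_trans n2.
by case: (1%N \in D); rewrite ?orbT.
Qed.

Lemma ext_range a : ext a -> (1 <= a <= n)%N.
Proof. by case/orP => /andP[]. Qed.

Lemma not_peak_valley a : is_peak lam n a -> is_valley lam n a -> False.
Proof.
case/and3P => _ /orP[aD|/eqP an] naD /and3P[_ naD2 H].
  by rewrite aD in naD2.
case/orP: H => [H|/eqP H]; first by rewrite H in naD.
by move: n2; rewrite -an; case: a H {an naD naD2} => [|[|]].
Qed.

Lemma nx_gt a : (a <= n)%N -> (a < nx a)%N.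
Proof.
move=> an; rewrite /next_ext; apply: bigmin_ge => // j.
by rewrite mem_index_iota => /andP[].
Qed.

Lemma nx_le a : (nx a <= n.+1)%N.
Proof.
rewrite /next_ext; case: (bigmin_cases n.+1 (index_iota a.+1 n.+1) ext) => [->//|[]].
by rewrite mem_index_iota => /andP[_ /ltnW].
Qed.

Lemma nx_min a b : ext b -> (a < b)%N -> (b <= n)%N -> (nx a <= b)%N.
Proof. by move=> eb ab bn; apply: bigmin_le => //; rewrite mem_index_iota ab. Qed.

Lemma nx_ext a : (nx a <= n)%N -> ext (nx a).
Proof.
rewrite /next_ext; case: (bigmin_cases n.+1 (index_iota a.+1 n.+1) ext) => [->|[]//].
by rewrite ltnn.
Qed.

Lemma not_ext_between a c : (a < c)%N -> (c < nx a)%N -> (c <= n)%N -> ~~ ext c.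
Proof.
move=> ac cn c_n; apply/negP => ec.
by have := nx_min ec ac c_n; rewrite leqNgt cn.
Qed.

Lemma sx_gt b p : ext b -> (b < p)%N -> (b < slope_x lam n p)%N.
Proof.
move=> eb bp; rewrite /slope_x ltnS.
by apply: bigmax_ge_el => //; rewrite mem_index_iota.
Qed.

Lemma comp_exists c : (1 <= c <= n)%N -> exists a, [/\ ext a, (a <= c)%N & (c < nx a)%N].
Proof.
elim: c => // c IH /andP[_ cn].
case: c IH cn => [|c] IH cn.
  by exists 1%N; rewrite ext1 leqnn nx_gt // (leq_trans _ n2).
have [a [ea ac cna]] := IH (andb_true_intro (conj (isT : (0 < c.+1)%N) (ltnW cn))).
case: (ltnP c.+2 (nx a)) => H.
  by exists a; rewrite ea H (leq_trans ac).
have nxe : nx a = c.+2 by apply/eqP; rewrite eqn_leq H cna.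
exists c.+2; rewrite -{1}nxe nx_ext ?nxe // leqnn nx_gt //.
Qed.

Lemma comp_unique c a a' : ext a -> (a <= c)%N -> (c < nx a)%N ->
   ext a' -> (a' <= c)%N -> (c < nx a')%N -> (c <= n)%N -> a = a'.
Proof.
move=> ea ac ca ea' ac' ca' cn.
case: (ltngtP a a') => // H.
  by have := nx_min ea' H (leq_trans ac' cn); rewrite leqNgt (leq_ltn_trans ac' ca).
by have := nx_min ea H (leq_trans ac cn); rewrite leqNgt (leq_ltn_trans ac ca').
Qed.

Lemma run_up a p : is_valley lam n a -> (a <= p)%N -> (p.+1 <= nx a)%N -> (p < n)%N -> p \notin D.
Proof.
move=> va; elim: p => [|p IH] ap pnx pn.
  by rewrite (negbTE D0).
case: (ltngtP a p.+1) ap => [ap _|//|<- _]; last by case/and3P: va.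
have Hp : p \notin D by apply: IH; [by [] | exact: ltnW | exact: ltnW].
have := not_ext_between ap pnx (ltnW pn).
rewrite /is_extremal /is_peak negb_or => /andP[+ _].
by rewrite /= Hp (ltn_eqF pn) ltnW //= orbF andbT.
Qed.

Lemma run_dn a p : is_peak lam n a -> (a <= p)%N -> (p.+1 <= nx a)%N -> (p < n)%N -> p \in D.
Proof.
move=> va; elim: p => [|p IH] ap pnx pn.
  by have := ext_range (introT orP (or_introl va)); rewrite leqn0 in ap; rewrite (eqP ap).
case: (ltngtP a p.+1) ap => [ap _|//|ea _]; last first.
  case/and3P: va => _ /orP[aD|/eqP e] _; first by rewrite -ea.
  by rewrite -ea e ltnn in pn.
have Hp : p \in D by apply: IH; [by [] | exact: ltnW | exact: ltnW].
have := not_ext_between ap pnx (ltnW pn).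
rewrite /is_extremal /is_valley negb_or => /andP[_].
by rewrite /= Hp ltnW //= andbT negbK.
Qed.

End Comb.

Section Words.
Variables (n : nat) (s : 'S_n).

Lemma size_word : size (word s) = n.
Proof. by rewrite size_map size_enum_ord. Qed.

Lemma uniq_word : uniq (word s).
Proof.
rewrite map_inj_uniq ?enum_uniq // => i j [] /val_inj.
exact: perm_inj.
Qed.

Lemma mem_word a : (a \in word s) = (1 <= a <= n)%N.
Proof.
apply/mapP/idP => [[i _ ->]|]; first by rewrite /= ltn_ord.
case: a => // b /= bn; exists ((s^-1)%g (Ordinal bn)); first by rewrite mem_enum.
by rewrite permKV.
Qed.

Lemma wval_wpos a : (1 <= a <= n)%N -> wval s (wpos s a) = a.
Proof. by rewrite -mem_word => aw; rewrite /wval /wpos /= nth_index. Qed.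

Lemma wpos_range a : (1 <= a <= n)%N -> (1 <= wpos s a <= n)%N.
Proof.
rewrite -mem_word => aw; have := index_mem a (word s); rewrite aw size_word => H.
by rewrite /wpos /= H.
Qed.

Lemma wval_range p : (1 <= p <= n)%N -> (1 <= wval s p <= n)%N.
Proof.
case: p => // p /= pn; rewrite -mem_word /wval /=; apply: mem_nth.
by rewrite size_word.
Qed.

Lemma wpos_wval p : (1 <= p <= n)%N -> wpos s (wval s p) = p.
Proof.
case: p => // p /= pn; rewrite /wval /wpos /= index_uniq ?size_word ?uniq_word //.
Qed.

Lemma wpos_inj a b : (1 <= a <= n)%N -> (1 <= b <= n)%N -> wpos s a = wpos s b -> a = b.
Proof. by move=> ha hb e; rewrite -(wval_wpos ha) -(wval_wpos hb) e. Qed.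

Lemma wval_inj p q : (1 <= p <= n)%N -> (1 <= q <= n)%N -> wval s p = wval s q -> p = q.
Proof. by move=> hp hq e; rewrite -(wpos_wval hp) -(wpos_wval hq) e. Qed.

End Words.

Section Comb2.
Variables (n : nat) (lam : seq nat).
Hypothesis n2 : (2 <= n)%N.
Hypothesis Hlam : is_composition lam n.
Variable s : 'S_n.
Hypothesis sO : s \in Omega n lam.

Local Notation D := (descent_set lam).
Local Notation ext := (is_extremal lam n).
Local Notation nx := (next_ext lam n).

Lemma omegaD p : (1 <= p)%N -> (p < n)%N -> (p \in D) = (wval s p.+1 < wval s p)%N.
Proof.
move=> p1 pn; move: sO; rewrite inE => /forallP /(_ (Ordinal (ltnW pn : (p < n.+1)%N))) /eqP /= ->.
by rewrite /is_descent p1 pn.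
Qed.

Lemma step_up q : (1 <= q)%N -> (q < n)%N -> q \notin D -> (wval s q < wval s q.+1)%N.
Proof.
move=> q1 qn nD; have := omegaD q1 qn; rewrite (negbTE nD) => /esym/negbT.
rewrite -leqNgt leq_eqVlt => /orP[/eqP e|//].
have e' := @wval_inj n s q q.+1 (andb_true_intro (conj q1 (ltnW qn))) qn e.
by move/eqP: e'; rewrite eqn_leq ltnn andbF.
Qed.

Lemma step_dn q : (1 <= q)%N -> (q < n)%N -> q \in D -> (wval s q.+1 < wval s q)%N.
Proof. by move=> q1 qn; rewrite omegaD. Qed.

Lemma chain_up a p q : is_valley lam n a -> (a <= p)%N -> (p < q)%N -> (q <= nx a)%N -> (q <= n)%N ->
  (wval s p < wval s q)%N.
Proof.
move=> va ap; have a1 : (1 <= a)%N by case/and3P: va => /andP[].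
elim: q => // q IH pq qnx qn.
have st : (wval s q < wval s q.+1)%N.
  apply: step_up => //; first by apply: leq_trans a1 (leq_trans ap _); rewrite -ltnS.
  by apply: (run_up Hlam va) => //; apply: leq_trans ap _; rewrite -ltnS.
rewrite ltnS leq_eqVlt in pq; case/orP: pq => [/eqP ->//|pq'].
apply: ltn_trans st; apply: IH => //; [exact: ltnW | exact: ltnW].
Qed.

Lemma chain_dn a p q : is_peak lam n a -> (a <= p)%N -> (p < q)%N -> (q <= nx a)%N -> (q <= n)%N ->
  (wval s q < wval s p)%N.
Proof.
move=> va ap; have a1 : (1 <= a)%N by case/and3P: va => /andP[].
elim: q => // q IH pq qnx qn.
have st : (wval s q.+1 < wval s q)%N.
  apply: step_dn => //; first by apply: leq_trans a1 (leq_trans ap _); rewrite -ltnS.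
  by apply: (run_dn va) => //; apply: leq_trans ap _; rewrite -ltnS.
rewrite ltnS leq_eqVlt in pq; case/orP: pq => [/eqP ->//|pq'].
apply: ltn_trans st _; apply: IH => //; [exact: ltnW | exact: ltnW].
Qed.

Lemma same_up a p q : is_valley lam n a -> (a <= p)%N -> (a <= q)%N ->
  (p <= nx a)%N -> (q <= nx a)%N -> (p <= n)%N -> (q <= n)%N ->
  (p < q)%N = (wval s p < wval s q)%N.
Proof.
move=> va ap aq pa qa pn qn; case: (ltngtP p q) => [pq|qp|->]; last by rewrite ltnn.
  by rewrite (chain_up va ap pq qa qn).
by apply/esym/negbTE; rewrite -leqNgt ltnW // (chain_up va aq qp pa pn).
Qed.

Lemma same_dn a p q : is_peak lam n a -> (a <= p)%N -> (a <= q)%N ->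
  (p <= nx a)%N -> (q <= nx a)%N -> (p <= n)%N -> (q <= n)%N ->
  (p < q)%N = (wval s q < wval s p)%N.
Proof.
move=> va ap aq pa qa pn qn; case: (ltngtP p q) => [pq|qp|->]; last by rewrite ltnn.
  by rewrite (chain_dn va ap pq qa qn).
by apply/esym/negbTE; rewrite -leqNgt ltnW // (chain_dn va aq qp pa pn).
Qed.

End Comb2.

Lemma restr_exists n k (s : 'S_n) : (k <= n)%N ->
  exists tau : 'S_k, word tau = [seq a <- word s | (a <= k)%N].
Proof.
move=> kn; set w := [seq a <- word s | (a <= k)%N].
have uw : uniq w by rewrite filter_uniq // uniq_word.
have memw a : (a \in w) = (1 <= a <= k)%N.
  rewrite mem_filter mem_word; case: a => //= a; case: (ltnP a k) => //= h.
  by rewrite (leq_trans h kn).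
have sw : size w = k.
  have pe : perm_eq w (iota 1 k).
    by apply: uniq_perm => // [|a]; rewrite ?iota_uniq // memw mem_iota add1n ltnS.
  by rewrite (perm_size pe) size_iota.
have nthw (i : 'I_k) : (1 <= nth 0%N w i <= k)%N by rewrite -memw mem_nth // sw.
pose g (i : 'I_k) : 'I_k := insubd i (nth 0%N w i).-1.
have vg i : val (g i) = (nth 0%N w i).-1.
  rewrite val_insubd; case/andP: (nthw i) => h1 h2.
  by rewrite ifT //; case: (nth 0%N w i) h1 h2.
have ginj : injective g.
  move=> i j /(congr1 val); rewrite !vg.
  have := nthw i; have := nthw j.
  case Ei: (nth 0%N w i) => [|a]; case Ej: (nth 0%N w j) => [|b] //= _ _ ab.
  by apply: val_inj; apply/eqP; rewrite -(nth_uniq 0%N _ _ uw) ?sw ?ltn_ord // Ei Ej ab eqxx.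
exists (perm ginj).
rewrite /word (eq_map (g := fun i : 'I_k => nth 0%N w i)); last first.
  move=> i; rewrite permE vg; by case/andP: (nthw i); case: (nth 0%N w i).
have -> : [seq nth 0%N w i | i : 'I_k <- enum 'I_k] = [seq nth 0%N w i | i <- map val (enum 'I_k)].
  by rewrite -map_comp.
by rewrite val_enum_ord -{1}sw -/(mkseq _ _) mkseq_nth.
Qed.

Lemma word_inj k (tau tau' : 'S_k) : word tau = word tau' -> tau = tau'.
Proof.
move/eq_in_map => e; apply/permP => i.
have := e i; rewrite mem_enum => /(_ isT) [] /val_inj //.
Qed.

Lemma wpos_ord k (tau : 'S_k) (o : 'I_k) : wpos tau o.+1 = ((tau^-1)%g o).+1.
Proof.
rewrite /wpos /word; congr S.
have -> : o.+1 = (fun i : 'I_k => (tau i).+1) ((tau^-1)%g o) by rewrite permKV.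
rewrite index_map ?index_enum_ord // => x y /= [] /val_inj; exact: perm_inj.
Qed.

Lemma incr_ge k (g : 'I_k -> 'I_k) : (forall u v : 'I_k, (u < v)%N = (g u < g v)%N) ->
  forall u : 'I_k, (u <= g u)%N.
Proof.
move=> Hg; suff H : forall m (u : 'I_k), val u = m -> (m <= g u)%N by move=> u; exact: H.
elim=> // m IH u um.
have mk : (m < k)%N by rewrite (leq_trans _ (ltn_ord u)) // um.
have := IH (Ordinal mk) erefl.
have := Hg (Ordinal mk) u; rewrite /= um ltnSn => /esym H1 H2.
exact: leq_ltn_trans H2 H1.
Qed.

Lemma incr_id k (g : 'I_k -> 'I_k) : (forall u v : 'I_k, (u < v)%N = (g u < g v)%N) ->
  forall u : 'I_k, g u = u.
Proof.
move=> Hg.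
have ginj : injective g.
  move=> u v e; apply/eqP; case: (ltngtP u v) => [h|h|/val_inj->//].
    by move: h; rewrite Hg e ltnn.
  by move: h; rewrite Hg e ltnn.
pose p := perm ginj.
have Hh : forall u v : 'I_k, (u < v)%N = ((p^-1)%g u < (p^-1)%g v)%N.
  by move=> u v; rewrite [RHS]Hg -!(permE ginj) !permKV.
move=> u; apply/val_inj/eqP; rewrite eqn_leq (incr_ge Hg) andbT.
have := incr_ge Hh (g u); rewrite -(permE ginj) permK //.
Qed.

Lemma perm_order_eq k (tau tau' : 'S_k) :
  (forall i j, (1 <= i <= k)%N -> (1 <= j <= k)%N ->
     (wpos tau i < wpos tau j)%N = (wpos tau' i < wpos tau' j)%N) -> tau = tau'.
Proof.
move=> H.
have H2 (o1 o2 : 'I_k) : ((tau^-1)%g o1 < (tau^-1)%g o2)%N = ((tau'^-1)%g o1 < (tau'^-1)%g o2)%N.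
  by have := H o1.+1 o2.+1; rewrite !wpos_ord !ltnS !ltn_ord => /(_ isT isT).
have F : forall u, (tau'^-1)%g (tau u) = u.
  apply: incr_id => u v; by rewrite -H2 !permK.
apply: invg_inj; apply/permP => o.
by rewrite -(permKV tau o) F permK.
Qed.

Local Open Scope classical_set_scope.
Local Open Scope ring_scope.

Lemma index_filter_lt (T : eqType) (P : pred T) (s : seq T) x y :
  x \in s -> y \in s -> P x -> P y ->
  (index x (seq.filter P s) < index y (seq.filter P s))%N = (index x s < index y s)%N.
Proof.
move=> + + Px Py; elim: s => //= z s IH; rewrite !in_cons.
case: (eqVneq z x) => [-> _ _|zx].
  by rewrite Px /= eqxx; case: eqVneq.
case: (eqVneq z y) zx => [-> zx _ _|zy zx xs ys].
  by rewrite Py /= eqxx (negbTE zx) ltn0.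
case: (P z) => /=; rewrite ?(negbTE zx) ?(negbTE zy) ?ltnS IH //.
Qed.

Section RealP.
Variable R : realType.
Variables (n : nat) (lam : seq nat).
Hypothesis n2 : (2 <= n)%N.
Hypothesis Hlam : is_composition lam n.

Local Notation ext := (is_extremal lam n).
Local Notation nx := (next_ext lam n).

Definition Iv (a : nat) : set R :=
  [set t : R | ((a%:R - 1) / n%:R < t) && (t < ((next_ext lam n a)%:R - 1) / n%:R)].

Lemma U_upE : U_up lam n = \bigcup_(a in [set a : nat | is_valley lam n a]) Iv a.
Proof. by []. Qed.
Lemma U_downE : U_down lam n = \bigcup_(a in [set a : nat | is_peak lam n a]) Iv a.
Proof. by []. Qed.

Lemma n_gt0 : 0 < n%:R :> R.
Proof. by rewrite ltr0n (leq_trans _ n2). Qed.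

Lemma ltr_divn (x y : R) : (x / n%:R < y / n%:R) = (x < y).
Proof. by rewrite ltr_pM2r // invr_gt0 n_gt0. Qed.

Lemma ler_divn (x y : R) : (x / n%:R <= y / n%:R) = (x <= y).
Proof. by rewrite ler_pM2r // invr_gt0 n_gt0. Qed.

Lemma ltr_natm1 (a b : nat) : ((a%:R - 1 : R) < b%:R - 1) = (a < b)%N.
Proof. by rewrite ltrD2r ltr_nat. Qed.

Lemma ltr_natm1l (a b : nat) : ((a%:R - 1 : R) < b%:R) = (a <= b)%N.
Proof. by rewrite ltrBlDr natr1 ltr_nat ltnS. Qed.

Lemma ler_natm1r (a b : nat) : ((a%:R : R) <= b%:R - 1) = (a < b)%N.
Proof. by rewrite lerBrDr natr1 ler_nat. Qed.

Lemma endpoint_out a' b : ext a' -> (ext b /\ (b <= n)%N) \/ b = n.+1 ->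
  ~ Iv a' ((b%:R - 1) / n%:R).
Proof.
move=> ea' Hb; rewrite /Iv /= !ltr_divn !ltr_natm1 => /andP[ab bn].
case: Hb => [[eb bn']|bE].
  by have := nx_min eb ab bn'; rewrite leqNgt bn.
by have := nx_le n lam a'; rewrite leqNgt -bE bn.
Qed.

Lemma Iv_interval a : is_interval (Iv a).
Proof.
move=> x y /andP[lx _] /andP[_ yr] z /andP[xz zy].
by rewrite /Iv /= (lt_le_trans lx xz) (le_lt_trans zy yr).
Qed.

Lemma same_comp_char (E : nat -> bool) (HE : forall a, E a -> ext a) (u v : R) :
  same_comp (\bigcup_(a in [set a : nat | E a]) Iv a) u v <->
  exists a, [/\ E a, Iv a u & Iv a v].
Proof.
split.
  case=> C [Cu CA cC] Cv.
  have iC := (connected_intervalP C).1 cC.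
  have [a Ea Iau] := CA u Cu.
  exists a; split => //.
  case/andP: (Iau) => lu ur.
  rewrite /Iv /=; apply/negPn/negP; rewrite negb_and -!leNgt => /orP[vl|rv].
    have Cl : C ((a%:R - 1) / n%:R) by apply: (iC v u) => //; rewrite vl ltW.
    have [a' Ea' H] := CA _ Cl.
    by apply: (endpoint_out (HE _ Ea') _ H); left; split; [exact: HE | case/andP: (ext_range (HE _ Ea))].
  have Cr : C (((nx a)%:R - 1) / n%:R) by apply: (iC u v) => //; rewrite rv ltW.
  have [a' Ea' H] := CA _ Cr.
  apply: (endpoint_out (HE _ Ea') _ H).
  have := nx_le n lam a; rewrite leq_eqVlt ltnS => /orP[/eqP->|H']; [by right | left].
  by split => //; apply: nx_ext.
case=> a [Ea Iu Iv']; exists (Iv a) => //; split => //.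
  by move=> x Ix; exists a.
by apply/connected_intervalP; exact: Iv_interval.
Qed.

Lemma Iv_cell (a c : nat) (x : R) : (1 <= a)%N ->
  (c%:R - 1) / n%:R < x -> x < c%:R / n%:R ->
  Iv a x <-> (a <= c)%N /\ (c < nx a)%N.
Proof.
move=> a1 cx xc; split.
  case/andP => ax xr; split.
    by rewrite -ltr_natm1l -ltr_divn (lt_trans ax xc).
  by rewrite -ltr_natm1 -ltr_divn (lt_trans cx xr).
case=> ac cn; apply/andP; split.
  apply: le_lt_trans cx; rewrite ler_divn lerD2r ler_nat //.
apply: lt_le_trans xc _; rewrite ler_divn ler_natm1r //.
Qed.

Lemma sy_le p : (slope_y lam n p <= n)%N.
Proof.
have -> : slope_y lam n p = (nx p).-1 by [].
by have := nx_le n lam p; case: (nx p) => //= m; rewrite ltnS.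
Qed.

Lemma pos_in_comp p c a : (1 <= p <= n)%N ->
  (slope_x lam n p <= c <= slope_y lam n p)%N -> ext a -> (a <= c)%N -> (c < nx a)%N ->
  (a <= p)%N /\ (p <= nx a)%N.
Proof.
move=> /andP[p1 pn] /andP[sxc csy] ea ac cna; split.
  rewrite leqNgt; apply/negP => pa.
  have := nx_min ea pa (proj2 (andP (ext_range ea))).
  have := nx_gt lam pn; have csy' : (c <= (nx p).-1)%N by [].
  case: (nx p) csy' => // m /= csy' _ H.
  by have := leq_trans ac csy'; rewrite leqNgt H.
rewrite leqNgt; apply/negP => ap.
have e := nx_ext (leq_trans (ltnW ap) pn).
have := sx_gt e ap; rewrite ltnNge (leq_trans sxc (ltnW cna)).
by [].
Qed.

Lemma det_paintbox (s : 'S_n) (sO : s \in Omega n lam) (k : nat) (k1 : (1 <= k <= n)%N)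
    (x : nat -> R) (tau : 'S_k) :
  word tau = [seq a <- word s | (a <= k)%N] ->
  (forall i, (1 <= i <= k)%N -> exists c, [/\ (slope_x lam n (wpos s i) <= c <= slope_y lam n (wpos s i))%N,
      (c%:R - 1) / n%:R < x i & x i < c%:R / n%:R]) ->
  paintbox_is (U_up lam n) (U_down lam n) x tau.
Proof.
move=> wt Hx i j hi hj.
have hin a : (1 <= a <= k)%N -> (1 <= a <= n)%N.
  by case/andP=> -> /leq_trans; apply; case/andP: k1.
have -> : (wpos tau i < wpos tau j)%N = (wpos s i < wpos s j)%N.
  rewrite /wpos ltnS [in RHS]ltnS wt index_filter_lt ?mem_word ?hin //.
  - by case/andP: hi.
  - by case/andP: hj.
have cell a : (1 <= a <= k)%N -> exists c a0, [/\ (slope_x lam n (wpos s a) <= c <= slope_y lam n (wpos s a))%N,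
      (c%:R - 1) / n%:R < x a, x a < c%:R / n%:R & [/\ ext a0, (a0 <= c)%N & (c < nx a0)%N]].
  move=> ha; have [c [hc cx xc]] := Hx a ha.
  have c1 : (1 <= c <= n)%N.
    case/andP: hc => h1 h2; rewrite (leq_trans _ h1) //=.
    exact: leq_trans h2 (sy_le _).
  have [a0 H] := comp_exists n2 Hlam c1.
  by exists c, a0.
have [ci [ai [hci cxi xci [eai aci cai]]]] := cell i hi.
have [cj [aj [hcj cxj xcj [eaj acj caj]]]] := cell j hj.
have Ivi a : ext a -> Iv a (x i) <-> a = ai.
  move=> ea; have a1 := proj1 (andP (ext_range ea)).
  rewrite (Iv_cell a1 cxi xci); split => [[h1 h2]|->//].
  apply: (comp_unique ea h1 h2 eai aci cai).
  by case/andP: hci => _ /leq_trans; apply; exact: sy_le.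
have Ivj a : ext a -> Iv a (x j) <-> a = aj.
  move=> ea; have a1 := proj1 (andP (ext_range ea)).
  rewrite (Iv_cell a1 cxj xcj); split => [[h1 h2]|->//].
  apply: (comp_unique ea h1 h2 eaj acj caj).
  by case/andP: hcj => _ /leq_trans; apply; exact: sy_le.
have sup : same_comp (U_up lam n) (x i) (x j) <-> is_valley lam n ai /\ ai = aj.
  have HE a : is_valley lam n a -> ext a by move=> va; rewrite /is_extremal va orbT.
  rewrite U_upE same_comp_char //; split => [[a [va /(Ivi _ (HE _ va)) e1 /(Ivj _ (HE _ va)) e2]]|[va e]].
    by rewrite -e1 -e2.
  by exists ai; split => //; [apply/Ivi | apply/Ivj].
have sdn : same_comp (U_down lam n) (x i) (x j) <-> is_peak lam n ai /\ ai = aj.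
  have HE a : is_peak lam n a -> ext a by move=> va; rewrite /is_extremal va.
  rewrite U_downE same_comp_char //; split => [[a [va /(Ivi _ (HE _ va)) e1 /(Ivj _ (HE _ va)) e2]]|[va e]].
    by rewrite -e1 -e2.
  by exists ai; split => //; [apply/Ivi | apply/Ivj].
have [pi1 pin] := andP (wpos_range s (hin _ hi)).
have [pj1 pjn] := andP (wpos_range s (hin _ hj)).
have [aip pinx] := pos_in_comp (wpos_range s (hin _ hi)) hci eai aci cai.
have [ajp pjnx] := pos_in_comp (wpos_range s (hin _ hj)) hcj eaj acj caj.
have xlt c c' (y y' : R) : (c < c')%N -> y < c%:R / n%:R -> (c'%:R - 1) / n%:R < y' -> y < y'.
  move=> cc' h1 h2; apply: lt_trans h1 _; apply: le_lt_trans _ h2; rewrite ler_divn ler_natm1r //.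
case: (eqVneq i j) => [<-|ij].
  rewrite ltnn; split => // -[[_ _]|[_]|[_]]; by rewrite ?ltxx ?ltnn.
have pij : wpos s i != wpos s j.
  by apply/eqP => /(wpos_inj (hin _ hi) (hin _ hj)); apply/eqP.
case: (ltngtP ai aj) => [lt|gt|eq].
- have c_lt : (ci < cj)%N by apply: leq_trans cai (leq_trans (nx_min eaj lt (proj2 (andP (ext_range eaj)))) acj).
  have -> : (wpos s i < wpos s j)%N.
    rewrite ltn_neqAle pij /=; apply: leq_trans pinx (leq_trans (nx_min eaj lt (proj2 (andP (ext_range eaj)))) ajp).
  split => // _; apply: Or31; split.
  + by case/sup => _ e; rewrite e ltnn in lt.
  + by case/sdn => _ e; rewrite e ltnn in lt.
  + exact: xlt c_lt xci cxj.
- have c_lt : (cj < ci)%N by apply: leq_trans caj (leq_trans (nx_min eai gt (proj2 (andP (ext_range eai)))) aci).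
  have -> : (wpos s i < wpos s j)%N = false.
    apply/negbTE; rewrite -leqNgt; apply: ltnW; rewrite ltn_neqAle eq_sym pij /=.
    apply: leq_trans pjnx (leq_trans (nx_min eai gt (proj2 (andP (ext_range eai)))) aip).
  split => // -[[_ _ h]|[/sup [_ e] _]|[/sdn [_ e] _]].
  + by have := xlt _ _ _ _ c_lt xcj cxi; rewrite ltNge (ltW h).
  + by rewrite e ltnn in gt.
  + by rewrite e ltnn in gt.
- subst aj.
  case/orP: eai => [pk|va].
    have nv : ~ is_valley lam n ai by move=> va; exact: (not_peak_valley n2 pk va).
    rewrite (same_dn sO pk aip ajp pinx pjnx pin pjn) !wval_wpos ?hin //.
    split => [h|].
      by apply: Or33; split => //; apply/sdn.
    case=> [[_ /(_ (sdn.2 (conj pk erefl))) []]|[/sup [] //]|[_ //]].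
  have nv : ~ is_peak lam n ai by move=> pk; exact: (not_peak_valley n2 pk va).
  rewrite (same_up Hlam sO va aip ajp pinx pjnx pin pjn) !wval_wpos ?hin //.
  split => [h|].
    by apply: Or32; split => //; apply/sup.
  case=> [[/(_ (sup.2 (conj va erefl))) []]|[_ //]|[/sdn [] //]].
Qed.

End RealP.

Section Prob.
Variables (R : realType) (d : measure_display) (T : measurableType d).
Variable (P : probability T R).

Lemma ccE (a b : R) : [set t : R | a <= t <= b] = [set` `[a, b]].
Proof. by apply/seteqP; split => x /=; rewrite in_itv. Qed.

Lemma cc_meas (a b : R) : measurable [set t : R | a <= t <= b].
Proof. by rewrite ccE; exact: measurable_itv. Qed.

Lemma preim_meas (X : T -> R) (A : set R) : measurable_fun setT X -> measurable A ->
  measurable (X @^-1` A).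
Proof. by move=> mX mA; rewrite -[X @^-1` A]setTI; apply: mX. Qed.

Lemma uniform_null (X : T -> R) a b (A : set R) : is_uniform P X a b -> measurable A ->
  lebesgue_measure (A `&` [set t | a <= t <= b]) = 0%E -> P.-negligible (X @^-1` A).
Proof.
case=> mX HX mA H0; apply/negligibleP; first exact: preim_meas.
by have := HX A mA; rewrite H0 mul0e.
Qed.

Lemma ae_in (X : T -> R) a b : is_uniform P X a b ->
  P.-negligible (~` [set t | a <= X t <= b]).
Proof.
move=> HU; have -> : ~` [set t | a <= X t <= b] = X @^-1` (~` [set t | a <= t <= b]) by [].
apply: uniform_null HU _ _; first by apply: measurableC; exact: cc_meas.
by rewrite setICl measure0.
Qed.

Lemma ae_pt (X : T -> R) a b (c : R) : is_uniform P X a b -> P.-negligible (X @^-1` [set c]).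
Proof.
move=> HU; apply: uniform_null HU _ _; first exact: measurable_set1.
have [cI|cI] := boolP (a <= c <= b).
  have -> : [set c] `&` [set t | a <= t <= b] = [set c].
    by apply/seteqP; split => x /=; [case | move=> ->; split].
  exact: lebesgue_measure_set1.
have -> : [set c] `&` [set t | a <= t <= b] = set0.
  by apply/seteqP; split => x //= [-> h]; rewrite h in cI.
exact: measure0.
Qed.

Variable n : nat.

Lemma ae_offgrid (X : T -> R) a b : is_uniform P X a b ->
  P.-negligible (~` [set t | forall m : nat, X t != m%:R / n%:R]).
Proof.
move=> HU; apply: (negligibleS (A := \bigcup_m (X @^-1` [set m%:R / n%:R]))).
  move=> t /= /existsNP [m /negP]; rewrite negbK => /eqP e; by exists m.
by apply: negligible_bigcup => m; exact: ae_pt HU.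
Qed.

Hypothesis n2 : (2 <= n)%N.
Variable lam : seq nat.
Hypothesis Hlam : is_composition lam n.

Lemma cell_find (x : R) (L h : nat) : L%:R / n%:R <= x -> x <= (L + h)%:R / n%:R ->
  (forall m : nat, x != m%:R / n%:R) ->
  exists c, [/\ (L < c <= L + h)%N, (c%:R - 1) / n%:R < x & x < c%:R / n%:R].
Proof.
elim: h => [|h IH] Lx xLh Hm.
  rewrite addn0 in xLh; have e : x = L%:R / n%:R by apply/le_anti; rewrite xLh Lx.
  by move: (Hm L); rewrite e eqxx.
case: (leP x ((L + h)%:R / n%:R)) => H.
  have [c [/andP[c1 c2] cx xc]] := IH Lx H Hm.
  by exists c; rewrite c1 (leq_trans c2) ?leq_add2l.
exists (L + h.+1)%N; split.
- by rewrite leqnn addnS ltnS leq_addr.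
- by rewrite addnS -natr1 addrK.
- by rewrite lt_neqAle xLh andbT; apply: Hm.
Qed.

Definition good (s : 'S_n) (X : 'I_n -> T -> R) (t : T) : Prop :=
  forall o : 'I_n,
    ((slope_x lam n (wpos s o.+1))%:R - 1) / n%:R <= X o t <= (slope_y lam n (wpos s o.+1))%:R / n%:R
    /\ forall m : nat, X o t != m%:R / n%:R.

Lemma good_ae (s : 'S_n) (X : 'I_n -> T -> R) : averaged_coords lam s P X ->
  P.-negligible (~` [set t | good s X t]).
Proof.
case=> _ HU.
pose F (r : nat) : set T := if insub r is Some o then
   (~` [set t | ((slope_x lam n (wpos s (val o).+1))%:R - 1) / n%:R <= X o t <= (slope_y lam n (wpos s (val o).+1))%:R / n%:R])
   `|` (~` [set t | forall m : nat, X o t != m%:R / n%:R]) else set0.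
apply: (@negligibleS _ _ _ P (\bigcup_(r : nat) F r)).
  move=> t /= /existsNP [j /not_andP hh]; exists (val j) => //; rewrite /F valK.
  by case: hh => h; [left|right].
apply: negligible_bigcup => r; rewrite /F; case: insubP => [j _ _|_]; last exact: negligible_set0.
by apply: negligibleU; [exact: ae_in (HU j) | exact: ae_offgrid (HU j)].
Qed.

Lemma xatE (X : 'I_n -> T -> R) t (i : nat) (hi : (i.-1 < n)%N) :
  xat X t i = X (Ordinal hi) t.
Proof. by rewrite /xat insubT. Qed.

Lemma part1 (k : nat) (s : 'S_n) (X : 'I_n -> T -> R) :
  (1 <= k <= n)%N -> s \in Omega n lam -> averaged_coords lam s P X ->
  {ae P, forall t, exists tau : 'S_k,
     restr_is s tau /\ paintbox_is (@U_up R lam n) (@U_down R lam n) (xat X t) tau}.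
Proof.
move=> k1 sO HA.
have [tau wt] := restr_exists s (proj2 (andP k1)).
apply: (negligibleS (A := ~` [set t | good s X t])); last exact: good_ae.
apply: subsetC => t Gt /=; exists tau; split; first by rewrite /restr_is wt.
apply: (det_paintbox n2 Hlam sO k1 wt) => i hi.
have hin : (i.-1 < n)%N.
  by case/andP: hi => i1 ik; case: i i1 ik => //= i _ ik; apply: leq_trans ik (proj2 (andP k1)).
have ie : (Ordinal hin).+1 = i by rewrite /= prednK //; case/andP: hi.
have [/andP[lo hi'] off] := Gt (Ordinal hin).
rewrite ie in lo hi'.
rewrite xatE.
set sx := slope_x lam n (wpos s i) in lo *.
set sy := slope_y lam n (wpos s i) in hi' *.
have sx1 : (1 <= sx)%N by [].
have Lsy : (sx.-1 <= sy)%N.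
  have := le_trans lo hi'; rewrite (ler_divn n2).
  by case: (sx) sx1 => // m _; rewrite -natr1 addrK ler_nat.
have h1 : (sx.-1)%:R / n%:R <= X (Ordinal hin) t.
  by case: (sx) sx1 lo => // m _; rewrite /= -natr1 addrK.
have h2 : X (Ordinal hin) t <= (sx.-1 + (sy - sx.-1))%:R / n%:R by rewrite subnKC.
have [c [/andP[c1 c2] cx xc]] := cell_find h1 h2 off.
rewrite (subnKC Lsy) in c2; rewrite (prednK sx1) in c1.
by exists c; split => //; rewrite c1 c2.
Qed.

Lemma mset_cst (Q : Prop) : measurable [set _ : T | Q].
Proof.
case: (pselect Q) => q.
  by have -> : [set _ : T | Q] = setT by apply/seteqP; split.
by have -> : [set _ : T | Q] = set0 by apply/seteqP; split.
Qed.

Lemma mset_imp (b : bool) (A : T -> Prop) : measurable [set t | A t] -> measurable [set t | b -> A t].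
Proof.
case: b => mA.
  by have -> : [set t | true -> A t] = [set t | A t] by apply/seteqP; split => t /=; auto.
by have -> : [set t | false -> A t] = setT by apply/seteqP; split.
Qed.

Lemma mset_iff (b : bool) (A : T -> Prop) : measurable [set t | A t] -> measurable [set t | b <-> A t].
Proof.
case: b => mA.
  have -> : [set t | true <-> A t] = [set t | A t] by apply/seteqP; split => t /= h; [exact/h | split].
  by [].
have -> : [set t | false <-> A t] = ~` [set t | A t].
  by apply/seteqP; split => t /=; [case=> _ h /h | move=> h; split => // /h].
exact: measurableC.
Qed.

Lemma xat_meas (X : 'I_n -> T -> R) (mX : forall o, measurable_fun setT (X o)) (i : nat) :
  measurable_fun setT (fun t => xat X t i).
Proof. by rewrite /xat; case: (insub i.-1) => [j|] /=; [exact: mX | exact: measurable_cst]. Qed.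

Lemma Iv_meas (a : nat) : measurable (@Iv R n lam a).
Proof.
have -> : @Iv R n lam a = [set` `](a%:R - 1) / n%:R, ((next_ext lam n a)%:R - 1) / n%:R[].
  by apply/seteqP; split => x /=; rewrite in_itv.
exact: measurable_itv.
Qed.

Lemma msame (E : nat -> bool) (HE : forall a, E a -> is_extremal lam n a) (f g : T -> R) :
  measurable_fun setT f -> measurable_fun setT g ->
  measurable [set t | same_comp (\bigcup_(a in [set a : nat | E a]) @Iv R n lam a) (f t) (g t)].
Proof.
move=> mf mg.
have -> : [set t | same_comp (\bigcup_(a in [set a : nat | E a]) @Iv R n lam a) (f t) (g t)] =
   \bigcup_a ([set _ : T | E a] `&` (f @^-1` @Iv R n lam a) `&` (g @^-1` @Iv R n lam a)).
  apply/seteqP; split => t /=.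
    by move/(same_comp_char n2 HE) => [a [Ea h1 h2]]; exists a.
  by move=> [a _ [[Ea h1] h2]]; apply/(same_comp_char n2 HE); exists a.
apply: bigcupT_measurable => a; apply: measurableI; first apply: measurableI.
- exact: mset_cst.
- exact: preim_meas (Iv_meas a).
- exact: preim_meas (Iv_meas a).
Qed.

Lemma mlt (f g : T -> R) : measurable_fun setT f -> measurable_fun setT g ->
  measurable [set t | f t < g t].
Proof.
move=> mf mg; have mt : measurable [set true] by [].
have := measurable_realfun.measurable_fun_ltr mf mg measurableT mt.
by rewrite setTI; congr measurable; apply/seteqP; split => t /=.
Qed.

Lemma pb_meas (k : nat) (tau : 'S_k) (X : 'I_n -> T -> R) (mX : forall o, measurable_fun setT (X o)) :
  measurable [set t | paintbox_is (@U_up R lam n) (@U_down R lam n) (xat X t) tau].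
Proof.
have -> : [set t | paintbox_is (@U_up R lam n) (@U_down R lam n) (xat X t) tau] =
  \bigcap_i \bigcap_j [set t | (1 <= i <= k)%N -> (1 <= j <= k)%N ->
     ((wpos tau i < wpos tau j)%N <->
     [\/ [/\ ~ same_comp (U_up lam n) (xat X t i) (xat X t j), ~ same_comp (U_down lam n) (xat X t i) (xat X t j)
          & xat X t i < xat X t j],
         same_comp (U_up lam n) (xat X t i) (xat X t j) /\ (i < j)%N
       | same_comp (U_down lam n) (xat X t i) (xat X t j) /\ (j < i)%N])].
  apply/seteqP; split => t /=.
    by move=> H i _ j _; exact: H.
  by move=> H i j; apply: H.
apply: bigcapT_measurable => i; apply: bigcapT_measurable => j.
apply: mset_imp; apply: mset_imp; apply: mset_iff.
have mi := xat_meas mX i; have mj := xat_meas mX j.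
have mu : measurable [set t | same_comp (U_up lam n) (xat X t i) (xat X t j)].
  by rewrite U_upE; apply: msame => // a va; rewrite /is_extremal va orbT.
have md : measurable [set t | same_comp (U_down lam n) (xat X t i) (xat X t j)].
  by rewrite U_downE; apply: msame => // a va; rewrite /is_extremal va.
have -> : forall A B C D E : T -> Prop, [set t | [\/ [/\ ~ A t, ~ B t & C t], A t /\ D t | B t /\ E t]] =
    ((~` [set t | A t]) `&` (~` [set t | B t]) `&` [set t | C t]) `|` ([set t | A t] `&` [set t | D t])
    `|` ([set t | B t] `&` [set t | E t]).
  move=> A B C D E; apply/seteqP; split => t /=.
    by case=> [[? ? ?]|[? ?]|[? ?]]; [left; left | left; right | right].
  by case=> [[[[? ?] ?]|[? ?]]|[? ?]]; [apply: Or31 | apply: Or32 | apply: Or33].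
apply: measurableU; first apply: measurableU; apply: measurableI => //; try exact: mset_cst.
- by apply: measurableI; exact: measurableC.
- exact: mlt.
Qed.

Lemma pb_unique (Uu Ud : set R) (x : nat -> R) (k : nat) (tau tau' : 'S_k) :
  paintbox_is Uu Ud x tau -> paintbox_is Uu Ud x tau' -> tau = tau'.
Proof.
move=> H H'; apply: perm_order_eq => i j hi hj.
apply/idP/idP => h; [apply/(H' i j hi hj).2; exact/(H i j hi hj).1
                    | apply/(H i j hi hj).2; exact/(H' i j hi hj).1].
Qed.

Lemma prob_S (k : nat) (s : 'S_n) (X : 'I_n -> T -> R) (tau : 'S_k) :
  (1 <= k <= n)%N -> s \in Omega n lam -> averaged_coords lam s P X ->
  P [set t | paintbox_is (@U_up R lam n) (@U_down R lam n) (xat X t) tau] =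
  (((restr_is s tau : nat))%:R)%:E.
Proof.
move=> k1 sO HA.
have mX : forall o, measurable_fun setT (X o) by move=> o; case: HA => _ /(_ o) [].
have mS := pb_meas tau mX.
have Hae := part1 k1 sO HA.
case: (boolP (restr_is s tau)) => r /=.
  have neg : P.-negligible (~` [set t | paintbox_is (@U_up R lam n) (@U_down R lam n) (xat X t) tau]).
    apply: negligibleS Hae; apply: subsetC => t /= [tau' [r' pb']].
    suff -> : tau = tau' by [].
    by apply: word_inj; move/eqP: r => ->; move/eqP: r' => ->.
  have := probability_setC P (measurableC mS); rewrite setCK.
  by rewrite (measure_negligible (measurableC mS) neg) sube0.
have neg : P.-negligible [set t | paintbox_is (@U_up R lam n) (@U_down R lam n) (xat X t) tau].
  apply: negligibleS Hae => t /= pb [tau' [r' pb']].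
  by have e := pb_unique pb pb'; rewrite e r' in r.
by rewrite (measure_negligible mS neg).
Qed.

End Prob.

Unset Implicit Arguments.

Theorem proposition12 (R : realType) (d : measure_display) (T : measurableType d)
    (P : probability T R) (n : nat) (lam : seq nat) :
  (2 <= n)%N -> is_composition lam n ->
  (forall (k : nat) (s : 'S_n) (X : 'I_n -> T -> R),
     (1 <= k <= n)%N -> s \in Omega n lam -> averaged_coords lam s P X ->
     {ae P, forall t, exists tau : 'S_k,
        restr_is s tau /\ paintbox_is (@U_up R lam n) (@U_down R lam n) (xat X t) tau})
  /\
  (forall (k : nat) (X : 'S_n -> 'I_n -> T -> R),
     (1 <= k <= n)%N ->
     (forall s, s \in Omega n lam -> averaged_coords lam s P (X s)) ->
     forall tau : 'S_k,
       (((#|Omega n lam|%:R)^-1)%:E *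
          \sum_(s in Omega n lam)
             P [set t | paintbox_is (@U_up R lam n) (@U_down R lam n) (xat (X s) t) tau])%E
       = ((#|[set s in Omega n lam | restr_is s tau]|%:R) / (#|Omega n lam|%:R))%:E).
Proof.
move=> n2 Hlam; split.
  by move=> k s X k1 sO HA; exact: (@part1 _ _ _ P n n2 lam Hlam k s X k1 sO HA).
move=> k X k1 HX tau.
rewrite (eq_bigr (fun s => (((restr_is s tau : nat))%:R)%:E)); last first.
  by move=> s sO; exact: (prob_S n2 Hlam tau k1 sO (HX s sO)).
rewrite sumEFin -EFinM mulrC; congr (EFin (_ * _)).
rewrite -natr_sum; congr (_%:R).
rewrite (eq_bigr (fun s => if restr_is s tau then 1%N else 0%N)); last by move=> s _; case: restr_is.
rewrite -big_mkcondr sum1_card -cardsE; apply: eq_card => s; by rewrite !inE.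
Qed.
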